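(* $\mathrm{GSym}=\mathrm{LWCQSym}$.
   Context: $\mathbb P$ and $\mathbb N$ denote positive and nonnegative integers. Let $X=\{x_i:i\in\mathbb P\}$ be commuting indeterminates. A left weak composition is a finite sequence $\alpha=(\alpha_1,\dots,\alpha_k)$ of nonnegative integers that is empty or has $\alpha_k>0$. For such $\alpha$, the left weak monomial quasisymmetric function is $M_\alpha=\sum_{0<i_1<\cdots<i_k}x_{i_1}^{\alpha_1}\cdots x_{i_k}^{\alpha_k}$, with $M_\emptyset=1$. $\mathrm{LWCQSym}$ is the $\mathbb Q$-span of all these $M_\alpha$ in $\mathbb Q[[X]]$. For a left weak composition $\alpha$ of length $k$ and $\beta\in\mathbb N^k$, $$\widehat M_{\binom{\alpha}{\beta}}=\sum_{0<i_1<\cdots<i_k}i_1^{\beta_1}\cdots i_k^{\beta_k}x_{i_1}^{\alpha_1}\cdots x_{i_k}^{\alpha_k}.$$ $\mathrm{GSym}$ is the $\mathbb Q$-span of all such $\widehat M_{\binom{\alpha}{\beta}}$. *)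

(* Defs.v *)
From mathcomp Require Import all_boot all_order all_algebra.
Set Implicit Arguments. Unset Strict Implicit. Unset Printing Implicit Defensive.
Import GRing.Theory Num.Theory.
Local Open Scope ring_scope.

(* Monomials in X = {x_1, x_2, ...}: a monomial is encoded by its list of
   exponents m = [:: e_1; ...; e_n], i.e. x_1^e_1 ... x_n^e_n (trailing zeros
   irrelevant). *)
Definition monomial := seq nat.
Definition series := monomial -> rat.

(* exponent of x_i (i >= 1) in m *)
Definition mexp (m : monomial) (i : nat) : nat := nth 0%N m i.-1.

Definition lwc (a : seq nat) : bool := (a == [::]) || (0 < last 0 a)%N.

(* Index sequences 0 < i_1 < ... < i_k (k = size a) with
   x_{i_1}^{a_1} ... x_{i_k}^{a_k} = x^m.  Any such sequence has
   i_k <= size m (as a_k > 0), so they are encoded as finite functions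
   'I_(size a) -> 'I_(size m).+1. *)
Definition matching (a : seq nat) (m : monomial)
    (s : {ffun 'I_(size a) -> 'I_(size m).+1}) : bool :=
  [&& [forall j : 'I_(size a), (0 < s j)%N],
      [forall j1 : 'I_(size a), forall j2 : 'I_(size a), (j1 < j2)%N ==> (s j1 < s j2)%N] &
      [forall i : 'I_(size m).+1,
         (0 < i)%N ==> (mexp m i == (\sum_(j | s j == i) nth 0%N a j)%N)]].

(* coefficient of x^m in M_a = sum_{0<i_1<...<i_k} x_{i_1}^{a_1}...x_{i_k}^{a_k} *)
Definition M (a : seq nat) : series := fun m =>
  (#|[pred s : {ffun 'I_(size a) -> 'I_(size m).+1} | matching s]|)%:R.

(* coefficient of x^m in Mhat_(a;b) =
   sum_{0<i_1<...<i_k} i_1^{b_1}...i_k^{b_k} x_{i_1}^{a_1}...x_{i_k}^{a_k} *)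
Definition Mhat (a b : seq nat) : series := fun m =>
  \sum_(s : {ffun 'I_(size a) -> 'I_(size m).+1} | matching s) \prod_(j < size a) ((s j : nat)%:R ^+ nth 0%N b j).

Definition LWCQSym (f : series) : Prop :=
  exists l : seq (rat * seq nat),
    (forall p, p \in l -> lwc p.2) /\
    forall m, f m = \sum_(p <- l) p.1 * M p.2 m.

Definition GSym (f : series) : Prop :=
  exists l : seq (rat * (seq nat * seq nat)),
    (forall p, p \in l -> lwc p.2.1 /\ size p.2.2 = size p.2.1) /\
    forall m, f m = \sum_(p <- l) p.1 * Mhat p.2.1 p.2.2 m.

(* Main.v *)
Require Import Defs.
From mathcomp Require Import all_boot all_order all_algebra.
Set Implicit Arguments. Unset Strict Implicit. Unset Printing Implicit Defensive.
Import GRing.Theory Num.Theory.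

Fixpoint plc (m : seq nat) (a : seq nat) (k : nat) : seq (seq nat) :=
  match m with
  | [::] => if a is [::] then [:: [::]] else [::]
  | m0 :: m' =>
      (if a is a0 :: a' then (if m0 == a0 then map (cons k.+1) (plc m' a' k.+1) else [::]) else [::])
      ++ (if m0 == 0 then plc m' a k.+1 else [::])
  end.

Definition mono (a x : seq nat) (i : nat) : nat :=
  \sum_(j < size a) (if nth 0 x j == i then nth 0 a j else 0).

Definition valid (m a : seq nat) (k : nat) (x : seq nat) : bool :=
  [&& size x == size a, path ltn k x, all (fun i => i <= k + size m) x &
      all (fun i => nth 0 m i == mono a x (k + i.+1)) (iota 0 (size m))].

Lemma mono_nil x i : mono [::] x i = 0.
Proof. by rewrite /mono big_ord0. Qed.

Lemma mono_cons a0 a x0 x i :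
  mono (a0 :: a) (x0 :: x) i = (if x0 == i then a0 else 0) + mono a x i.
Proof. by rewrite /mono big_ord_recl. Qed.

Lemma mono_small a x y i : 0 < i -> path ltn y x -> i <= y -> mono a x i = 0.
Proof.
move=> i0 hp hi; rewrite /mono big1 // => j _.
case: (ltnP j (size x)) => hj.
  have : nth 0 x j \in x by rewrite mem_nth.
  rewrite (path_sortedE ltn_trans) in hp; case/andP: hp => /allP hp _ /hp hy.
  by rewrite (gtn_eqF (leq_ltn_trans hi hy)).
by rewrite nth_default // eq_sym (gtn_eqF i0).
Qed.


Lemma valid_cons m0 m a k x :
  valid (m0 :: m) a k x =
  [&& size x == size a, path ltn k x, all (fun i => i <= k.+1 + size m) x,
      m0 == mono a x k.+1 &
      all (fun i => nth 0 m i == mono a x (k.+1 + i.+1)) (iota 0 (size m))].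
Proof.
rewrite /valid /= addn1 addSnnS.
congr [&& _, _, _ , _ & _].
rewrite -(addn0 1) iotaDl all_map; apply: eq_all => i /=.
by rewrite add1n addSnnS.
Qed.

Lemma mem_map_cons (y x0 : nat) x (L : seq (seq nat)) :
  (x0 :: x \in map (cons y) L) = (x0 == y) && (x \in L).
Proof.
case: eqP => [->|ne]; first by rewrite mem_map // => u v [].
by apply/mapP => -[z _ [E _]].
Qed.

Lemma plcP m a k x : (x \in plc m a k) = valid m a k x.
Proof.
elim: m a k x => [|m0 m IH] a k x.
  case: a => [|a0 a]; case: x => [|x0 x] //=.
  rewrite /valid /= addn0 in_nil; case: ltnP => //= h.
  by rewrite !andbF. by rewrite andbF.
rewrite mem_cat valid_cons.
have -> : (x \in (if m0 == 0 then plc m a k.+1 else [::])) = (m0 == 0) && valid m a k.+1 x.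
  by case: eqP => _; rewrite ?IH.
case: a => [|a0 a].
  case: x => [|x0 x]; last by rewrite /valid /= !andbF.
  by rewrite /= /valid /= mono_nil.
case: x => [|x0 x].
  rewrite /valid /= !andbF orbF; case: eqP => // _; by apply/mapP => -[].
have E : forall L, ((x0 :: x) \in (if m0 == a0 then map (cons k.+1) L else [::])) =
   (m0 == a0) && (x0 == k.+1) && (x \in L).
  by move=> L; case: eqP => _; rewrite ?mem_map_cons ?andbA.
rewrite E IH.
rewrite /valid /= eqSS.
case: (eqVneq x0 k.+1) => [->|ne].
  rewrite ltnn ltnSn leq_addr /=.
  case hp: (path ltn k.+1 x); last by rewrite !andbF.
  rewrite mono_cons eqxx (mono_small _ _ hp) // addn0.
  have -> : all (fun i => nth 0 m i == mono (a0 :: a) (k.+1 :: x) (k.+1 + i.+1)) (iota 0 (size m))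
          = all (fun i => nth 0 m i == mono a x (k.+1 + i.+1)) (iota 0 (size m)).
    apply: eq_all => i; rewrite mono_cons.
    by rewrite -{1}(addn0 k.+1) eqn_add2l /=.
  rewrite andbT /= !andbF orbF. by case: (m0 == a0); rewrite /= ?andbF.
rewrite andbF /=.
have lt : (k < x0) = (k.+1 < x0) by rewrite [LHS]leq_eqVlt eq_sym (negbTE ne).
rewrite lt.
case hp: (k.+1 < x0); rewrite /= ?andbF //.
case hp2: (path ltn x0 x); rewrite /= ?andbF //.
have hp3 : path ltn k.+1 (x0 :: x) by rewrite /= hp hp2.
rewrite (mono_small _ _ hp3) //.
by case: (size x == size a); case: (m0 == 0); rewrite /= ?andbF.
Qed.

Lemma plc_cons m0 m a k : plc (m0 :: m) a k =
      (if a is a0 :: a' then (if m0 == a0 then map (cons k.+1) (plc m a' k.+1) else [::]) else [::])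
      ++ (if m0 == 0 then plc m a k.+1 else [::]).
Proof. by []. Qed.

Lemma uniq_plc m a k : uniq (plc m a k).
Proof.
elim: m a k => [|m0 m IH] a k; first by case: a.
rewrite plc_cons cat_uniq; apply/and3P; split.
- case: a => [|a0 a] //; case: eqP => _ //.
  by rewrite map_inj_uniq // => u v [].
- apply/hasPn => x; case: eqP => _ //; rewrite plcP /valid => /and4P [_ hp _ _].
  case: a => [|a0 a] //; case: eqP => _ //.
  case: x hp => [|x0 x] hp; first by apply/mapP => -[]. move: hp => /= /andP [h _].
  by rewrite mem_map_cons (gtn_eqF h).
- by case: eqP.
Qed.

Definition gs n N (s : {ffun 'I_n -> 'I_N}) : seq nat := [seq (s j : nat) | j <- enum 'I_n].

Lemma size_gs n N (s : {ffun 'I_n -> 'I_N}) : size (gs s) = n.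
Proof. by rewrite size_map size_enum_ord. Qed.

Lemma gs_nth n N (s : {ffun 'I_n -> 'I_N}) (j : 'I_n) : nth 0 (gs s) j = s j.
Proof.
rewrite (nth_map j) ?size_enum_ord //.
by congr (nat_of_ord (s _)); apply: val_inj; rewrite /= nth_enum_ord.
Qed.

Lemma gs_inj n N : injective (@gs n N).
Proof.
move=> s1 s2 E; apply/ffunP => j; apply: val_inj => /=.
by rewrite -!gs_nth E.
Qed.

Lemma mono_gs (a m : seq nat) (s : {ffun 'I_(size a) -> 'I_(size m).+1}) (i : 'I_(size m).+1) :
  mono a (gs s) i = \sum_(j | s j == i) nth 0 a j.
Proof.
rewrite /mono [RHS]big_mkcond; apply: eq_bigr => j _.
by rewrite gs_nth.
Qed.

Lemma matching_valid (a m : seq nat) (s : {ffun 'I_(size a) -> 'I_(size m).+1}) :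
  matching s = valid m a 0 (gs s).
Proof.
rewrite /matching /valid size_gs eqxx /=.
have -> : all (fun i => i <= size m) (gs s).
  by apply/allP => i /mapP [j _ ->]; rewrite -ltnS ltn_ord.
rewrite andTb (path_sortedE ltn_trans) (sorted_pairwise ltn_trans) -!andbA.
congr [&& _, _ & _].
- apply/forallP/allP => [H i /mapP [j _ ->] | H j]; first exact: H.
  by apply: H; apply/mapP; exists j; rewrite ?mem_enum.
- apply/forallP/(pairwiseP 0) => [H i j | H j1].
    rewrite !inE size_gs => hi hj hij.
    have := forallP (H (Ordinal hi)) (Ordinal hj).
    by rewrite -(gs_nth s (Ordinal hi)) -(gs_nth s (Ordinal hj)) /= hij.
  apply/forallP => j2; apply/implyP => h.
  by rewrite -!gs_nth; apply: H; rewrite ?inE ?size_gs.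
- apply/forallP/allP => [H i | H i].
    rewrite mem_iota add0n => /andP [_ hi].
    have := implyP (H (Ordinal (hi : i.+1 < (size m).+1))) isT.
    by rewrite /mexp /= -(mono_gs s (Ordinal (hi : i.+1 < (size m).+1))).
  apply/implyP => hi.
  have hi2 : i.-1 < size m by rewrite -ltnS prednK // ltn_ord.
  have := H i.-1; rewrite mem_iota add0n hi2 prednK // => /(_ isT).
  by rewrite /mexp mono_gs.
Qed.

Lemma bridge (a m : seq nat) (W : seq nat -> rat) :
  (\sum_(s : {ffun 'I_(size a) -> 'I_(size m).+1} | matching s) W (gs s))%R =
  (\sum_(x <- plc m a 0) W x)%R.
Proof.
rewrite -big_filter -(big_map (@gs _ _) xpredT W).
apply: perm_big; apply: uniq_perm.
- by rewrite map_inj_uniq ?filter_uniq ?index_enum_uniq //; exact: gs_inj.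
- exact: uniq_plc.
move=> x; rewrite plcP; apply/mapP/idP => [[s] | hx].
  by rewrite mem_filter => /andP [hs _] ->; rewrite -matching_valid.
have hsz : size x = size a by case/and4P: hx => /eqP.
have hb : all (fun i => i <= size m) x by case/and4P: hx.
pose s : {ffun 'I_(size a) -> 'I_(size m).+1} := [ffun j : 'I_(size a) => (inord (nth 0 x j) : 'I_(size m).+1)].
have gsE : gs s = x.
  apply: (@eq_from_nth _ 0); first by rewrite size_gs hsz.
  move=> i; rewrite size_gs => hi.
  rewrite (gs_nth s (Ordinal hi)) ffunE /= inordK // ltnS.
  by apply: (allP hb); rewrite mem_nth ?hsz.
exists s => //; rewrite mem_filter mem_index_enum andbT matching_valid gsE //.
Qed.
Local Open Scope ring_scope.

Fixpoint wt (w : seq {poly rat}) (x : seq nat) : rat :=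
  match x with [::] => 1 | x0 :: x' => (head 1 w).[x0%:R] * wt (behead w) x' end.

Definition F (a : seq nat) (w : seq {poly rat}) (m : seq nat) (k : nat) : rat :=
  \sum_(x <- plc m a k) wt w x.

Fixpoint Phi (m : seq nat) (c : seq nat) : rat :=
  match m with
  | [::] => (c == [::])%:R
  | m0 :: m' => (if c is c0 :: c' then (m0 == c0)%:R * Phi m' c' else 0)
                + (m0 == 0%N)%:R * Phi m' c
  end.

Lemma F_nil a w k : F a w [::] k = (a == [::])%:R.
Proof. by case: a => [|a0 a]; rewrite /F /= ?big_cons ?big_nil // addr0. Qed.

Lemma F_cons a w m0 m k :
  F a w (m0 :: m) k =
  (if a is a0 :: a' then (m0 == a0)%:R * ((head 1 w).[k.+1%:R] * F a' (behead w) m k.+1) else 0)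
  + (m0 == 0%N)%:R * F a w m k.+1.
Proof.
rewrite /F plc_cons big_cat; congr (_ + _).
  case: a => [|a0 a]; first by rewrite big_nil.
  case: eqP => _; last by rewrite big_nil mul0r.
  by rewrite big_map mul1r mulr_sumr.
by case: eqP => _; rewrite ?big_nil ?mul0r ?mul1r.
Qed.

Lemma wt_nilw x : wt [::] x = 1.
Proof. by elim: x => [|x0 x IH] //=; rewrite IH mulr1 hornerE. Qed.

Lemma wt_nseq n x : wt (nseq n 1) x = 1.
Proof.
elim: x n => [|x0 x IH] n //=.
case: n => [|n] /=; first by rewrite wt_nilw mulr1 hornerE.
by rewrite IH mulr1 hornerE.
Qed.

Lemma F_ones c w m k : (forall x, wt w x = 1) -> F c w m k = F c [::] m k.
Proof. by move=> hw; apply: eq_bigr => x _; rewrite hw wt_nilw. Qed.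

Lemma F_Phi c m k : F c [::] m k = Phi m c.
Proof.
elim: m c k => [|m0 m IH] c k; first by rewrite F_nil.
rewrite F_cons /= IH; case: c => [|c0 c] //.
by rewrite IH -polyC1 hornerC mul1r.
Qed.

Definition cond (m : seq nat) (a0 t : nat) : rat :=
  ((all (fun e => e == 0%N) (take t m)) && (nth 0%N m t == a0))%:R.

Lemma cond0 m0 m a0 : cond (m0 :: m) a0 0 = (m0 == a0)%:R.
Proof. by []. Qed.

Lemma condS m0 m a0 t : cond (m0 :: m) a0 t.+1 = (m0 == 0%N)%:R * cond m a0 t.
Proof. by rewrite /cond /=; case: (m0 == 0%N); rewrite ?mul1r ?mul0r. Qed.

Lemma F_unroll a0 a w m k :
  F (a0 :: a) w m k =
  \sum_(t < size m) cond m a0 t * ((head 1 w).[(k + t).+1%:R] * F a (behead w) (drop t.+1 m) (k + t).+1).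
Proof.
elim: m k => [|m0 m IH] k; first by rewrite F_nil big_ord0.
rewrite F_cons big_ord_recl cond0 addn0 /= drop0; congr (_ + _).
rewrite IH mulr_sumr; apply: eq_bigr => i _.
have -> : bump 0 i = i.+1 by []. by rewrite condS addnS -addSn mulrA.
Qed.

Lemma Phi_unroll r a0 c m :
  Phi m (nseq r 0%N ++ a0 :: c) =
  \sum_(t < size m) cond m a0 t * ('C(t, r)%:R * Phi (drop t.+1 m) c).
Proof.
elim: m r => [|m0 m IH] r; first by case: r => [|r]; rewrite /= big_ord0.
rewrite big_ord_recl cond0 /= drop0.
have E : forall G : nat -> rat, \sum_(i < size m) G (bump 0 i) = \sum_(i < size m) G i.+1 by [].
rewrite (E (fun t => cond (m0 :: m) a0 t * ('C(t, r)%:R * Phi (drop t.+1 (m0 :: m)) c))) /=.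
under eq_bigr => i _ do rewrite condS.
case: r => [|r] /=.
  rewrite bin0 mul1r; congr (_ + _).
  rewrite (IH 0%N) mulr_sumr; apply: eq_bigr => i _.
  by rewrite !bin0 mulrA.
rewrite bin0n /= mul0r mulr0 add0r -mulrDr (IH r) (IH r.+1) -big_split mulr_sumr /=.
apply: eq_bigr => i _.
by rewrite -!mulrA -mulrDr binS natrD mulrDl addrC.
Qed.

From mathcomp Require Import ring.

Lemma bin_mul t r : (t * 'C(t, r) = r.+1 * 'C(t, r.+1) + r * 'C(t, r))%N.
Proof.
rewrite mul_bin_left -mulnDl.
case: (leqP r t) => h; first by rewrite subnK.
by rewrite bin_small // !muln0.
Qed.

Lemma binexp_mulX (L : seq ({poly rat} * nat)) : exists L' : seq ({poly rat} * nat),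
  forall k t : nat, (\sum_(p <- L) p.1.[k%:R] * 'C(t, p.2)%:R) * ((k + t).+1)%:R
                   = \sum_(p <- L') p.1.[k%:R] * 'C(t, p.2)%:R.
Proof.
elim: L => [|[b r] L [L' H]]; first by exists [::] => k t; rewrite !big_nil mul0r.
exists [:: (b * ('X + 1), r), (b * (r.+1)%:R%:P, r.+1), (b * r%:R%:P, r) & L'] => k t.
rewrite !big_cons -H mulrDl !addrA; congr (_ + _) => /=.
have Hn : ((k + t).+1 * 'C(t, r) = k.+1 * 'C(t, r) + (r.+1 * 'C(t, r.+1) + r * 'C(t, r)))%N.
  by rewrite -bin_mul -mulnDl addSn.
have Hr := congr1 (fun n : nat => n%:R : rat) Hn.
rewrite /= !natrD !natrM in Hr.
rewrite !hornerE -mulrA [_ * ((k + t).+1)%:R]mulrC.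
rewrite -natrM Hn !natrD !natrM.
ring.
Qed.

Lemma binexp (P : {poly rat}) : exists L : seq ({poly rat} * nat),
  forall k t : nat, P.[((k + t).+1)%:R] = \sum_(p <- L) p.1.[k%:R] * 'C(t, p.2)%:R.
Proof.
elim/poly_ind: P => [|P c [L H]]; first by exists [::] => k t; rewrite big_nil hornerE.
have [L' H'] := binexp_mulX L.
exists ((c%:P, 0%N) :: L') => k t.
by rewrite hornerMXaddC H H' big_cons hornerC bin0 mulr1 addrC.
Qed.

Lemma step1 a0 c (P : {poly rat}) : exists l : seq ({poly rat} * seq nat),
  (forall p, p \in l -> exists r, p.2 = nseq r 0%N ++ a0 :: c) /\
  forall k m, \sum_(t < size m) cond m a0 t * (P.[((k + t).+1)%:R] * Phi (drop t.+1 m) c)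
              = \sum_(p <- l) p.1.[k%:R] * Phi m p.2.
Proof.
have [L H] := binexp P.
exists [seq (p.1, nseq p.2 0%N ++ a0 :: c) | p <- L]; split.
  by move=> p /mapP [q _ ->]; exists q.2.
move=> k m; rewrite big_map.
under [LHS]eq_bigr => t _ do rewrite H mulr_suml mulr_sumr.
rewrite exchange_big /=; apply: eq_bigr => p _.
rewrite Phi_unroll mulr_sumr; apply: eq_bigr => t _.
ring.
Qed.

Definition inv (a c : seq nat) : Prop :=
  (c = [::] <-> a = [::]) /\ last 0%N c = last 0%N a.

Lemma inv_step a0 a c r : inv a c -> inv (a0 :: a) (nseq r 0%N ++ a0 :: c).
Proof.
move=> [[h1 h2] h3]; split; first by split => //; case: r.
rewrite last_cat /=.
case: c h1 h2 h3 => [|c0 c] h1 h2 h3; first by rewrite h1.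
case: a h1 h2 h3 => [|a1 a] h1 h2 h3; first by have := h2 erefl.
by [].
Qed.

Lemma step2 a0 a (w0 : {poly rat}) (l' : seq ({poly rat} * seq nat)) :
  (forall p, p \in l' -> inv a p.2) -> exists l : seq ({poly rat} * seq nat),
  (forall p, p \in l -> inv (a0 :: a) p.2) /\
  forall k m, \sum_(t < size m) cond m a0 t * (w0.[((k + t).+1)%:R] *
                   \sum_(p <- l') p.1.[((k + t).+1)%:R] * Phi (drop t.+1 m) p.2)
              = \sum_(p <- l) p.1.[k%:R] * Phi m p.2.
Proof.
elim: l' => [|[q c] l' IH] hl.
  exists [::]; split => // k m; rewrite big_nil big1 // => t _.
  by rewrite big_nil !mulr0.
have [|l2 [h2 H2]] := IH; first by move=> p hp; apply: hl; rewrite in_cons hp orbT.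
have [l1 [h1 H1]] := step1 a0 c (w0 * q).
have hc : inv a c by apply: (hl (q, c)); rewrite mem_head.
exists (l1 ++ l2); split.
  move=> p; rewrite mem_cat => /orP [/h1 [r ->] | /h2] //.
  exact: inv_step.
move=> k m; rewrite big_cat /= -H1 -H2 -big_split; apply: eq_bigr => t _ /=.
rewrite big_cons hornerM; ring.
Qed.

Lemma claim a : forall w : seq {poly rat}, exists l : seq ({poly rat} * seq nat),
  (forall p, p \in l -> inv a p.2) /\
  forall k m, F a w m k = \sum_(p <- l) p.1.[k%:R] * Phi m p.2.
Proof.
elim: a => [|a0 a IH] w.
  exists [:: (1, [::])]; split.
    by move=> p; rewrite inE => /eqP -> /=.
  move=> k m; rewrite big_cons big_nil addr0 -polyC1 hornerC mul1r.
  rewrite -(F_Phi _ _ k); apply: eq_big_seq => x; rewrite plcP => /and4P [/eqP hs _ _ _].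
  by case: x hs.
have [l' [hl' H']] := IH (behead w).
have [l [hl H]] := step2 a0 (head 1 w) hl'.
exists l; split => // k m.
rewrite F_unroll -H; apply: eq_bigr => t _.
by rewrite H'.
Qed.

Lemma wt_prod w x : wt w x = \prod_(0 <= j < size x) (nth 1 w j).[(nth 0%N x j)%:R].
Proof.
elim: x w => [|x0 x IH] w; first by rewrite big_geq.
rewrite /= big_nat_recl // IH; case: w => [|w0 w] //=.
by under eq_bigr do rewrite nth_nil.
Qed.

Lemma nth_X (b : seq nat) j : nth 1 (map (fun e => 'X^e) b) j = 'X^(nth 0%N b j) :> {poly rat}.
Proof.
elim: b j => [|b0 b IH] [|j] //=; by rewrite expr0.
Qed.

Lemma Mhat_F a b m : Mhat a b m = F a (map (fun e => 'X^e) b) m 0.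
Proof.
rewrite /Mhat /F -bridge; apply: eq_bigr => s _.
rewrite wt_prod size_gs big_mkord; apply: eq_bigr => j _.
by rewrite nth_X hornerXn gs_nth.
Qed.

Lemma M_F c m : M c m = F c [::] m 0.
Proof.
rewrite /M /F -bridge.
under eq_bigr do rewrite wt_nilw.
rewrite -sum1_card natr_sum.
by apply: eq_bigl.
Qed.

Lemma lwc_inv a c : lwc a -> inv a c -> lwc c.
Proof.
rewrite /lwc => /orP [/eqP -> [[_ ->]] // | ha] [_ ->].
by rewrite ha orbT.
Qed.

Lemma convG (l : seq (rat * (seq nat * seq nat))) :
  (forall p, p \in l -> lwc p.2.1 /\ size p.2.2 = size p.2.1) ->
  exists l2 : seq (rat * seq nat), (forall p, p \in l2 -> lwc p.2) /\
    forall m, \sum_(p <- l) p.1 * Mhat p.2.1 p.2.2 m = \sum_(p <- l2) p.1 * M p.2 m.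
Proof.
elim: l => [|[lam [a b]] l IH] hl; first by exists [::]; split => // m; rewrite !big_nil.
have [|l2 [h2 H2]] := IH; first by move=> p hp; apply: hl; rewrite in_cons hp orbT.
have [lq [hq Hq]] := claim a (map (fun e => 'X^e) b).
have ha : lwc a by have [] := hl (lam, (a, b)) (mem_head _ _).
exists ([seq (lam * q.1.[0%:R], q.2) | q <- lq] ++ l2); split.
  move=> p; rewrite mem_cat => /orP [/mapP [q hq' ->] | /h2] //=.
  exact: lwc_inv ha (hq _ hq').
move=> m; rewrite big_cons big_cat H2 big_map /= Mhat_F Hq mulr_sumr; congr (_ + _).
apply: eq_bigr => q _; by rewrite M_F F_Phi mulrA.
Qed.

Lemma Mhat_M c m : Mhat c (nseq (size c) 0%N) m = M c m.
Proof.
rewrite Mhat_F M_F /F; apply: eq_bigr => x _.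
have -> : map (fun e => 'X^e) (nseq (size c) 0%N) = nseq (size c) (1 : {poly rat}).
  by elim: (size c) => //= n ->; rewrite expr0.
by rewrite wt_nseq wt_nilw.
Qed.

Theorem proposition5p6 : forall f : series, GSym f <-> LWCQSym f.
Proof.
move=> f; split.
  move=> [l [hl hf]]; have [l2 [h2 H2]] := convG hl.
  by exists l2; split => // m; rewrite hf H2.
move=> [l [hl hf]].
exists [seq (p.1, (p.2, nseq (size p.2) 0%N)) | p <- l]; split.
  by move=> p /mapP [q hq ->] /=; rewrite size_nseq; split => //; apply: hl.
by move=> m; rewrite hf big_map; apply: eq_bigr => p _ /=; rewrite Mhat_M.
Qed.
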